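(* Let $p$ be an odd prime. In the group $H = \langle a,b : a[a^p,b],\ b^p\rangle$, the element $a$ is nontrivial.
   Context: Commutator convention: $[x,y]=x^{-1}y^{-1}xy$, so $[a^p,b]=a^{-p}b^{-1}a^pb$. *)

(* Defs.v *)
From HB Require Import structures.
From mathcomp Require Import all_boot.
Set Implicit Arguments. Unset Strict Implicit. Unset Printing Implicit Defensive.

Inductive letter := LA | LAi | LB | LBi.

Definition letter_code (x : letter) : nat :=
  match x with LA => 0 | LAi => 1 | LB => 2 | LBi => 3 end.
Definition letter_decode (n : nat) : letter :=
  match n with 0 => LA | 1 => LAi | 2 => LB | _ => LBi end.
Lemma letter_codeK : cancel letter_code letter_decode.
Proof. by case. Qed.
HB.instance Definition _ := Equality.copy letter (can_type letter_codeK).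

Definition linv (x : letter) : letter :=
  match x with LA => LAi | LAi => LA | LB => LBi | LBi => LB end.

Definition word := seq letter.

Definition winv (w : word) : word := rev (map linv w).

Fixpoint wpow (w : word) (n : nat) : word :=
  match n with 0 => [::] | n'.+1 => w ++ wpow w n' end.

Definition wcomm (x y : word) : word := winv x ++ winv y ++ x ++ y.

Definition relators (p : nat) : seq word :=
  [:: [:: LA] ++ wcomm (wpow [:: LA] p) [:: LB]; wpow [:: LB] p].

(* Equality of words in H = <a,b | a[a^p,b], b^p>: the equivalence relation
   generated by deleting (or, by symmetry, inserting) a cancelling pair x x^-1
   or a relator anywhere inside a word. *)
Inductive Heq (p : nat) : word -> word -> Prop :=
| Heq_refl w : Heq p w w
| Heq_sym u v : Heq p u v -> Heq p v u
| Heq_trans u v w : Heq p u v -> Heq p v w -> Heq p u w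
| Heq_free u v x : Heq p (u ++ x :: linv x :: v) (u ++ v)
| Heq_rel u v r : r \in relators p -> Heq p (u ++ r ++ v) (u ++ v).

(* Main.v *)
From Stdlib Require Import Lia.
Require Import Defs.
From mathcomp Require Import all_boot.

Section M.
Variables (n k k' : nat).

Definition lact (l : letter) (x : nat) : nat :=
  match l with LA => x.+1 | LAi => x + n.-1 | LB => k * x | LBi => k' * x end.
Definition wact (w : word) (x : nat) : nat := foldl (fun x l => lact l x) x w.

Lemma lact_mod l x y : x = y %[mod n] -> lact l x = lact l y %[mod n].
Proof.
move=> H; case: l => /=.
- by rewrite -[x.+1]addn1 -[y.+1]addn1 -modnDml H modnDml.
- by rewrite -modnDml H modnDml.
- by rewrite -modnMmr H modnMmr.
- by rewrite -modnMmr H modnMmr.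
Qed.

Lemma wact_mod w x y : x = y %[mod n] -> wact w x = wact w y %[mod n].
Proof.
elim: w x y => [|l w IH] x y H //=.
by apply: IH; apply: lact_mod.
Qed.

Lemma wact_cat u v x : wact (u ++ v) x = wact v (wact u x).
Proof. by rewrite /wact foldl_cat. Qed.

Lemma wact_nseq m l x : wact (nseq m l) x = iter m (lact l) x.
Proof. by elim: m x => [|m IH] x //=; rewrite IH -iterS iterSr. Qed.

Lemma wpow_nseq m l : wpow [:: l] m = nseq m l.
Proof. by elim: m => //= m ->. Qed.

Lemma winv_nseq m l : winv (nseq m l) = nseq m (linv l).
Proof. by rewrite /winv map_nseq rev_nseq. Qed.

Hypothesis n_gt0 : 0 < n.
Hypothesis Hkk : k * k' = 1 %[mod n].
Hypothesis Hk'k : k' * k = 1 %[mod n].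

Lemma lact_inv l x : lact (linv l) (lact l x) = x %[mod n].
Proof.
case: l => /=.
- by rewrite addSnnS prednK // modnDr.
- by rewrite -addnS prednK // modnDr.
- by rewrite mulnA -modnMml Hk'k modnMml mul1n.
- by rewrite mulnA -modnMml Hkk modnMml mul1n.
Qed.

Definition Inv u v := forall x y, x = y %[mod n] -> wact u x = wact v y %[mod n].

Lemma Heq_inv p u v :
  (forall r x, r \in relators p -> wact r x = x %[mod n]) ->
  Heq p u v -> Inv u v.
Proof.
move=> Hr; elim => {u v}.
- by move=> w x y; apply: wact_mod.
- by move=> u v _ IH x y H; symmetry; apply: IH.
- move=> u v w _ IH1 _ IH2 x y H.
  by rewrite (IH1 x y H) (IH2 y y).
- move=> u v l x y H; rewrite !wact_cat /=.
  by apply: wact_mod; rewrite lact_inv; apply: wact_mod.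
- move=> u v r Hr' x y H; rewrite !wact_cat.
  by apply: wact_mod; rewrite Hr //; apply: wact_mod.
Qed.

End M.

Lemma iter_succ m x : iter m succn x = x + m.
Proof. by elim: m => [|m IH] /=; rewrite ?addn0 // IH addnS. Qed.

Lemma iter_addc m c x : iter m (fun y => y + c) x = x + m * c.
Proof. by elim: m => [|m IH] /=; rewrite ?addn0 // IH mulSnr addnA. Qed.

Lemma iter_mulc m c x : iter m (fun y => c * y) x = c ^ m * x.
Proof. by elim: m => [|m IH] /=; rewrite ?mul1n // IH expnS mulnA. Qed.

Lemma exists_inv n p : 0 < n -> coprime n p -> exists u, u * p = 1 %[mod n].
Proof.
move=> n0 cop; have [a _ Ha] := Bezoutl p n0.
move: Ha; rewrite (eqP cop) => Ha.
exists (a * n.-1).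
have H0 : (1 + a * p) * n.-1 = n.-1 + 1 %[mod n].
  rewrite addn1 prednK // modnn.
  by move/dvdnP: Ha => [q ->]; rewrite mulnAC modnMl.
move: H0; rewrite mulnDl mul1n => /eqP; rewrite eqn_modDl => /eqP.
by rewrite mulnAC.
Qed.

Theorem mainTheorem10 (p : nat) (hp : prime p) (hodd : odd p) :
  ~ Heq p [:: LA] [::].
Proof.
have p2 : 1 < p by apply: prime_gt1.
have p0 : 0 < p by apply: ltnW.
set n := p ^ p - p.-1 ^ p.
have le1 : p.-1 ^ p <= p ^ p by rewrite leq_exp2r // leq_pred.
have Hn : p ^ p = n + p.-1 ^ p by rewrite subnK.
have n1 : 1 < n.
  set P := p ^ p.-1.
  have P2 : 1 < P.
    apply: (leq_trans p2); rewrite /P -{1}(expn1 p) leq_pexp2l //.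
    by rewrite -ltnS prednK.
  apply: (leq_trans P2).
  have -> : P = p * P - p.-1 * P.
    have e1 : p - p.-1 = 1 by rewrite -{1}(prednK p0) subSnn.
    by rewrite -mulnBl e1 mul1n.
  have ep : p ^ p = p * P by rewrite /P -expnS prednK.
  have eq : p.-1 ^ p = p.-1 * p.-1 ^ p.-1 by rewrite -expnS prednK.
  rewrite /n ep eq.
  apply: leq_sub2l; apply: leq_mul => //.
  by rewrite /P leq_exp2r ?leq_pred // -ltnS prednK.
have n0 : 0 < n by apply: ltnW.
have cop : coprime n p.
  rewrite coprime_sym prime_coprime //; apply/negP => Hd.
  have : p %| p.-1 ^ p.
    have -> : p.-1 ^ p = p ^ p - n by rewrite Hn addKn.
    by apply: dvdn_sub => //; apply: dvdn_exp.
  rewrite Euclid_dvdX // p0 andbT => /dvdn_leq.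
  have : 0 < p.-1 by rewrite -ltnS prednK.
  move=> h /(_ h); rewrite leqNgt.
  by rewrite -{2}(prednK p0) ltnSn.
have [u Hu] := @exists_inv n p n0 cop.
set k := u * p.-1.
set k' := k ^ p.-1.
have Hkp : k * p = p.-1 %[mod n].
  by rewrite /k mulnAC -modnMml Hu modnMml mul1n.
have Hkp1 : k ^ p = 1 %[mod n].
  have E : p.-1 ^ p %% n = p ^ p %% n by rewrite Hn modnDl.
  rewrite /k expnMn -modnMmr E.
  rewrite modnMmr -expnMn.
  by rewrite -modnXm Hu modnXm exp1n.
have Hkk : k * k' = 1 %[mod n] by rewrite /k' -expnS prednK.
have Hk'k : k' * k = 1 %[mod n] by rewrite mulnC.
move=> H.
have HI := @Heq_inv n k k' n0 Hkk Hk'k p _ _ _ H.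
have : 1 = 0 %[mod n].
  apply: (HI) => //.
  move=> r x; rewrite !inE => /orP[] /eqP ->.
  - rewrite /wcomm !wpow_nseq !winv_nseq /=.
    rewrite !wact_cat /= !wact_nseq /= wact_cat wact_nseq /=.
    rewrite (_ : lact n k k' LAi = fun y => y + n.-1) //.
    rewrite (_ : lact n k k' LA = succn) // iter_succ iter_addc.
    set y := x.+1 + p * n.-1.
    rewrite mulnDr mulnA -modnDm -modnMml Hkk modnMml mul1n Hkp modnDm.
    have -> : y + p.-1 = x + p * n.
      have e : p * n = p * n.-1 + p by rewrite addnC -mulnS prednK.
      rewrite /y e; move/ltP: p0; rewrite -!plusE -!multE; lia.
    by rewrite addnC modnMDl.
  - by rewrite wpow_nseq wact_nseq iter_mulc -modnMml Hkp1 modnMml mul1n.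
by rewrite !modn_small.
Qed.
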